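(* Let $(\Theta,\mathcal{B},\mu,\omega)$ be an ergodic metric dynamical system and let $\Psi:\mathbb{R}\times\Theta\times\mathbb{R}\to\Theta\times\mathbb{R}$, $(t,\theta,x)\mapsto(\theta\cdot t,\psi_t(\theta,x))$, be a measurable map satisfying the cocycle property $\psi_{t_1+t_2}(\theta,x)=\psi_{t_2}(\theta\cdot t_1,\psi_{t_1}(\theta,x))$ for all $t_1,t_2\in\mathbb{R}$, $\theta\in\Theta$, $x\in\mathbb{R}$. Assume: (i) $\psi_t(\theta,x+1)=\psi_t(\theta,x)+1$ for all $(t,\theta,x)\in\mathbb{R}\times\Theta\times\mathbb{R}$; (ii) there is a constant $C\ge0$ such that $\psi_t(\theta,x)\le\psi_t(\theta,x')+C$ for all $t\in\mathbb{R}$, $\theta\in\Theta$ and $x,x'\in\mathbb{R}$ with $x\le x'$; (iii) there is a constant $\eta\ge0$ such that $|\psi_t(\theta,x)-x|\le\eta$ for all $(t,\theta,x)\in[0,1]\times\Theta\times\mathbb{R}$. Then there exist a real number $\rho$ and a set $\Theta_0\subseteq\Theta$ with $\mu(\Theta_0)=1$ such that $$\lim_{t\to\infty}\frac{\psi_t(\theta,x)-x}{t}=\rho\quad\text{for all }(\theta,x)\in\Theta_0\times\mathbb{R}.$$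
   Context: A metric dynamical system $(\Theta,\mathcal{B},\mu,\omega)$ consists of a probability space $(\Theta,\mathcal{B},\mu)$ and a measurable flow $\omega:\mathbb{R}\times\Theta\to\Theta$, written $\omega_t(\theta)=\theta\cdot t$, with $\mu\circ\omega_t^{-1}=\mu$ for all $t\in\mathbb{R}$; it is ergodic if every invariant measurable set has measure $0$ or $1$. *)

(* Defs.v *)
From HB Require Import structures.
From mathcomp Require Import all_boot all_order all_algebra.
From mathcomp Require Import all_classical all_reals all_analysis.
Set Implicit Arguments. Unset Strict Implicit. Unset Printing Implicit Defensive.
Import Order.TTheory GRing.Theory Num.Theory.
Import numFieldNormedType.Exports.
Local Open Scope classical_set_scope.
Local Open Scope ring_scope.

(* A metric dynamical system (Theta, B, mu, omega): mu is a probability measure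
   on the measurable type T, w : R -> T -> T is a measurable flow
   (w t th = th . t), jointly measurable in (t, th), with w 0 = id,
   w (s + t) = w t \o w s, and mu preserved by every w t. *)
Definition metric_dynamical_system (R : realType) (d : measure_display)
  (T : measurableType d) (mu : probability T R) (w : R -> T -> T) : Prop :=
  [/\ measurable_fun setT (fun p : R * T => w p.1 p.2),
      (forall th, w 0 th = th),
      (forall s t th, w (s + t) th = w t (w s th)) &
      (forall t A, measurable A -> mu (w t @^-1` A) = mu A)].

Definition ergodic_mds (R : realType) (d : measure_display)
  (T : measurableType d) (mu : probability T R) (w : R -> T -> T) : Prop :=
  metric_dynamical_system mu w /\
  forall A : set T, measurable A -> (forall t, w t @^-1` A = A) ->
    mu A = 0%E \/ mu A = 1%E.

(* Main.v *)
Require Import Defs.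
From HB Require Import structures.
From mathcomp Require Import all_boot all_order all_algebra.
From mathcomp Require Import all_classical all_reals all_analysis.
From mathcomp Require Import ring lra zify.
From mathcomp Require Import measurable_realfun.
Import Order.TTheory GRing.Theory Num.Theory.
Import numFieldNormedType.Exports.
Local Open Scope classical_set_scope.
Local Open Scope ring_scope.
Lemma up_perturb (R : realType) (u v : nat -> R) (q : R) :
  (exists c, forall n, (0 < n)%N -> v n <= u n + c) ->
  (exists j k, forall n, (k <= n)%N -> u n <= n%:R * (q - (j.+1%:R)^-1)) ->
  (exists j k, forall n, (k <= n)%N -> v n <= n%:R * (q - (j.+1%:R)^-1)).
Proof.
move=> [c hc] [j [k hk]].
have e0 : 0 < (j.+1%:R : R)^-1 by rewrite invr_gt0 ltr0n.
set e := (j.+1%:R : R)^-1 in hk e0 *.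
have he : ((j.*2.+2)%:R : R)^-1 = e / 2.
  rewrite /e -invfM; congr (_^-1); rewrite -natrM; congr (_%:R).
  by rewrite muln2 doubleS.
exists j.*2.+1, (maxn k (maxn 1 (Num.bound (2 * `|c| / e)))) => n.
rewrite !geq_max => /and3P[kn n1 nb].
rewrite he.
have hb : 2 * `|c| / e < n%:R.
  have hb0 : 0 <= 2 * `|c| / e.
    apply: divr_ge0; last exact: ltW.
    by apply: mulr_ge0.
  apply: lt_le_trans (archi_boundP hb0) _.
  by rewrite ler_nat.
have hb2 : 2 * `|c| <= n%:R * e.
  apply: ltW; move: hb; rewrite ltr_pdivrMr //.
have := hc n n1; have := hk n kn; have := ler_norm c.
move=> h1 h2 h3.
clearbody e.
lra.
Qed.

Lemma cover_ineq (R : realType) (a : nat -> R) (h : nat -> nat -> R) (bad : nat -> R)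
  (D eta al0 : R) (k N M : nat) :
  0 <= D -> 0 <= eta -> (0 < k)%N -> (k <= N)%N ->
  (forall j n, a j + h j n - D <= a (j + n)%N) ->
  (forall j n, - (n.+1%:R * eta) <= h j n) ->
  (forall j, bad j = 0 \/ bad j = 1) ->
  (forall j, bad j = 0 -> exists n, (k <= n <= N)%N /\ n%:R * al0 <= h j n) ->
  a 0%N + (al0 - D / k%:R) * M%:R
    - (`|al0 - D / k%:R| + 2 * eta + D) * (\sum_(i < M) bad i)
    - ((`|al0 - D / k%:R| + eta) * N%:R + eta + D) <= a M.
Proof.
move=> D0 eta0 k0 kN ha hh hb01 hgood.
set al := al0 - D / k%:R.
set c := `|al| + 2 * eta + D.
set c2 := (`|al| + eta) * N%:R + eta + D.
have bad0 : forall i, 0 <= bad i by move=> i; case: (hb01 i) => ->.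
have S0 : forall j, 0 <= \sum_(j <= i < M) bad i.
  by move=> j; apply: sumr_ge0 => i _.
have c0 : 0 <= c by rewrite /c; have := normr_ge0 al; lra.
pose P j := a j + al * (M%:R - j%:R) - c * (\sum_(j <= i < M) bad i) - c2 <= a M.
have Htail : forall j, (j <= M)%N -> (M <= j + N)%N -> P j.
  move=> j jM MjN; rewrite /P.
  have := ha j (M - j)%N; rewrite subnKC //.
  have := hh j (M - j)%N.
  have hx : ((M - j)%N%:R : R) = M%:R - j%:R by rewrite natrB.
  have hxN : M%:R - j%:R <= (N%:R : R).
    by rewrite -hx ler_nat leq_subLR.
  have hx0 : 0 <= M%:R - j%:R :> R by rewrite -hx.
  have h1 : al * (M%:R - j%:R) <= `|al| * N%:R.
    apply: le_trans (ler_wpM2r hx0 (ler_norm al)) _.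
    by apply: ler_wpM2l.
  have h2 : (M - j)%N.+1%:R * eta <= (N%:R + 1) * eta.
    apply: ler_wpM2r => //; rewrite -addn1 natrD hx; lra.
  have h3 := S0 j.
  have h4 : 0 <= c * \sum_(j <= i < M) bad i by apply: mulr_ge0.
  have h5 : 0 <= eta * N%:R by apply: mulr_ge0.
  rewrite /c2; move=> hhj haj.
  have : (N%:R + 1) * eta = eta * N%:R + eta by ring.
  lra.
suff : forall r j, (j <= M)%N -> (M - j <= r)%N -> P j.
  move=> /(_ M 0%N (leq0n _) (leq_subr _ _)); rewrite /P.
  by rewrite subr0 big_mkord mulrC.
elim=> [|r IH] j jM.
  rewrite leqn0 subn_eq0 => Mj.
  by apply: Htail => //; apply: leq_trans Mj (leq_addr _ _).
move=> Mjr.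
case: (leqP M (j + N)) => MjN; first exact: Htail.
have jM' : (j < M)%N by apply: leq_ltn_trans (leq_addr _ _) MjN.
case: (hb01 j) => bj.
- have [n [/andP [kn nN] hn]] := hgood j bj.
  have jnM : (j + n <= M)%N by apply: leq_trans (ltnW MjN); rewrite leq_add2l.
  have := IH (j + n)%N jnM.
  have -> : (M - (j + n) <= r)%N.
    move: Mjr kn k0; clear; lia.
  move=> /(_ isT); rewrite /P => hIH.
  rewrite (@big_cat_nat _ _ _ (j + n)%N) ?leq_addr //=.
  have hS1' : 0 <= \sum_(j <= i < j + n) bad i by apply: sumr_ge0.
  have hS1 : 0 <= c * \sum_(j <= i < j + n) bad i by apply: mulr_ge0.
  rewrite natrD in hIH.
  have hajn := ha j n.
  have hDk : D <= n%:R * (D / k%:R).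
    have k0' : (0 : R) < k%:R by rewrite ltr0n.
    rewrite mulrA ler_pdivlMr // [n%:R * D]mulrC.
    by apply: ler_wpM2l => //; rewrite ler_nat.
  have hnal : n%:R * al = n%:R * al0 - n%:R * (D / k%:R) by rewrite /al mulrBr.
  rewrite mulrDr.
  lra.
- have := IH j.+1 jM'.
  have -> : (M - j.+1 <= r)%N by move: Mjr; clear; lia.
  move=> /(_ isT); rewrite /P => hIH.
  rewrite big_ltn // bj.
  rewrite -addn1 natrD addn1 in hIH.
  have := ha j 1%N; rewrite addn1.
  have := hh j 1%N.
  have hal := ler_norm al.
  move=> hh1 ha1.
  have hc : c = `|al| + 2 * eta + D by [].
  rewrite mulrDr.
  lra.
Qed.

Lemma markov_orbit (R : realType) (d : measure_display) (T : measurableType d)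
  (mu : probability T R) (w : R -> T -> T) (B : set T) (M : nat) (beta : R) :
  (forall t, measurable_fun setT (w t)) ->
  (forall t A, measurable A -> mu (w t @^-1` A) = mu A) ->
  measurable B -> (mu B <= beta%:E)%E -> 0 < beta -> (0 < M)%N ->
  exists th, \sum_(i < M) \1_B (w i%:R th) <= 2 * beta * M%:R.
Proof.
move=> wm wP mB muB b0 M0.
apply/not_existsP => hn.
have hlt : forall th, 2 * beta * M%:R < \sum_(i < M) \1_B (w i%:R th).
  by move=> th; rewrite ltNge; apply/negP => /(conj hn)/= [] /(_ th).
have mi : forall i : 'I_M, measurable (w i%:R @^-1` B).
  by move=> i; have := wm i%:R measurableT _ mB; rewrite setTI.
have feq th : (\sum_(i < M) (\1_B (w i%:R th) : R))%:E =
    \sum_(i < M) (\1_(w i%:R @^-1` B) th : R)%:E.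
  by rewrite sumEFin.
have hint : (\int[mu]_th ((\sum_(i < M) (\1_B (w i%:R th) : R))%:E) =
    \sum_(i < M) mu B)%E.
  under eq_integral do rewrite feq.
  have hm1 : forall i : 'I_M, measurable_fun setT (fun th => (\1_(w i%:R @^-1` B) th : R)%:E).
    by move=> i; apply/measurable_EFinP; apply: measurable_indic.
  have hm2 : forall (i : 'I_M) th, setT th -> (0 <= (\1_(w i%:R @^-1` B) th : R)%:E)%E.
    by move=> i th _; rewrite lee_fin.
  rewrite (ge0_integral_sum _ measurableT hm1 hm2).
  apply: eq_bigr => i _; rewrite integral_indic // setIT; exact: wP.
have hge : ((2 * beta * M%:R)%:E <= \int[mu]_th ((\sum_(i < M) (\1_B (w i%:R th) : R))%:E))%E.
  have -> : ((2 * beta * M%:R)%:E = \int[mu]_th (cst (2 * beta * M%:R)%:E th))%E.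
    rewrite integral_cst // -[LHS]mule1; congr (_ * _)%E; exact/esym/probability_setT.
  apply: ge0_le_integral => //.
  - by move=> th _; rewrite lee_fin /= !mulr_ge0 // ltW.
  - apply/measurable_EFinP; apply: measurable_sum => i.
    by apply: measurableT_comp; [exact: measurable_indic|exact: wm].
  - by move=> th _; rewrite lee_fin; apply: ltW.
move: hge; rewrite hint.
have : (\sum_(i < M) mu B <= (M%:R * beta)%:E)%E.
  apply: le_trans (_ : \sum_(i < M) beta%:E <= _)%E.
    by apply: lee_sum => i _.
  by rewrite sumEFin big_const_ord iter_addr_0 mulr_natl.
move=> h1 h2; have := le_trans h2 h1; rewrite lee_fin.
have : 0 < M%:R * beta :> R by rewrite mulr_gt0 // ltr0n.
lra.
Qed.

Lemma measurable_imp (d : measure_display) (T : measurableType d) (P : Prop) (A : set T) :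
  measurable A -> measurable [set x | P -> A x].
Proof.
move=> mA; have [p|np] := pselect P.
  by have -> : [set x | P -> A x] = A by apply/seteqP; split => x /=; auto.
by have -> : [set x | P -> A x] = setT by apply/seteqP; split => x //= _.
Qed.

Lemma measurable_le_fun (d : measure_display) (T : measurableType d) (R : realType)
  (f : T -> R) (c : R) :
  measurable_fun setT f -> measurable [set x | f x <= c].
Proof.
move=> mf; have := mf measurableT _ (measurable_itv `]-oo, c]); rewrite setTI.
by congr measurable; apply/seteqP; split => x /=; rewrite in_itv /=.
Qed.

Lemma mu_mono (R : realType) (d : measure_display) (T : measurableType d)
  (mu : probability T R) (A B : set T) :
  measurable A -> measurable B -> A `<=` B -> (mu A <= mu B)%E.
Proof. by move=> mA mB AB; apply: le_measure => //; rewrite inE. Qed.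

Section Gen.
Variables (R : realType) (d : measure_display) (T : measurableType d)
  (mu : probability T R) (w : R -> T -> T) (G : R -> T -> R) (D eta : R).
Hypothesis hw0 : forall th, w 0 th = th.
Hypothesis hwD : forall s t th, w (s + t) th = w t (w s th).
Hypothesis herg : forall A, measurable A -> (forall t, w t @^-1` A = A) ->
  mu A = 0%E \/ mu A = 1%E.
Hypothesis hD : 0 <= D.
Hypothesis heta : 0 <= eta.
Hypothesis hP1 : forall a b th, `|G (a + b) th - G a th - G b (w a th)| <= D.
Hypothesis hP2 : forall m s th, 0 <= s <= 1 -> `|G (m + s) th - G m th| <= eta.
Hypothesis hP3 : forall th, `|G 0 th| <= eta.
Hypothesis hGm : forall t, measurable_fun setT (G t).

Definition Up (q : R) : set T := [set th | exists j k, forall n, (k <= n)%N ->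
  G n%:R th <= n%:R * (q - (j.+1%:R)^-1)].

Lemma Gbound n th : `|G n%:R th| <= n.+1%:R * eta.
Proof.
elim: n => [|n IH]; first by rewrite mul1r; exact: hP3.
have := hP2 n%:R 1 th; rewrite ler01 lexx => /(_ isT).
rewrite -natr1 -[(n.+1).+1]addn1 natrD natr1.
move: IH; rewrite !ler_norml => /andP[h1 h2] /andP[h3 h4].
apply/andP; split; lra.
Qed.

Lemma perturb t th : -1 <= t <= 1 ->
  exists c, forall n, (0 < n)%N -> G n%:R (w t th) <= G n%:R th + c.
Proof.
move=> /andP[t1 t2].
exists (2 * eta + `|G t th| + D) => n n0.
have := hP1 t n%:R th; rewrite ler_norml => /andP[h1 _].
have hGt := ler_norm (- G t th); rewrite normrN in hGt.
case: (lerP 0 t) => t0.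
  have := hP2 n%:R t th; rewrite t0 t2 => /(_ isT).
  rewrite ler_norml [n%:R + t]addrC => /andP[_ h3].
  have := heta; lra.
case: n n0 h1 => // m _.
have hs : 0 <= 1 + t <= 1 by apply/andP; split; lra.
have := hP2 m%:R (1 + t) th hs.
have e : m%:R + (1 + t) = t + m.+1%:R :> R by rewrite -natr1; ring.
rewrite e ler_norml => /andP[_ h3] h1.
have := hP2 m%:R 1 th; rewrite ler01 lexx => /(_ isT).
rewrite natr1 ler_norml => /andP[h4 _].
lra.
Qed.

Lemma Up_inv1 q t th : -1 <= t <= 1 -> Up q th -> Up q (w t th).
Proof.
move=> ht hU; rewrite /Up /=.
apply: (@up_perturb R (fun n => G n%:R th) (fun n => G n%:R (w t th))).
  exact: perturb.
exact: hU.
Qed.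

Lemma Up_inv q t th : Up q th -> Up q (w t th).
Proof.
suff : forall n t th, - (n.+1%:R) <= t <= n.+1%:R -> Up q th -> Up q (w t th).
  move=> H; apply: (H (Num.bound `|t|)).
  have hb := archi_boundP (normr_ge0 t).
  have := ler_norm t; have := ler_norm (- t); rewrite normrN.
  rewrite -natr1; move=> h1 h2; apply/andP; split; lra.
elim=> [|n IH] {}t {}th ht hU; first exact: Up_inv1.
move: ht => /andP[ht1 ht2].
have hn : 1 <= n.+1%:R :> R by rewrite ler1n.
case: (lerP 0 t) => t0.
  have -> : t = (t - 1) + 1 by ring.
  rewrite hwD; apply: Up_inv1; first by apply/andP; split; lra.
  apply: IH => //; move: ht2; rewrite -[n.+2%:R]natr1; move=> ht2; apply/andP; split; lra.
have -> : t = (t + 1) + (-1) by ring.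
rewrite hwD; apply: Up_inv1; first by apply/andP; split; lra.
apply: IH => //; move: ht1; rewrite -[n.+2%:R]natr1; move=> ht1; apply/andP; split; lra.
Qed.

Lemma Up_measurable q : measurable (Up q).
Proof.
have -> : Up q = \bigcup_j \bigcup_k \bigcap_n
    [set th | (k <= n)%N -> G n%:R th <= n%:R * (q - (j.+1%:R)^-1)].
  apply/seteqP; split => th /=.
    by move=> [j [k hk]]; exists j => //; exists k => // n _; exact: hk.
  by move=> [j _ [k _ hk]]; exists j, k => n kn; exact: (hk n I kn).
apply: bigcupT_measurable => j; apply: bigcupT_measurable => k.
apply: bigcapT_measurable => n; apply: measurable_imp.
exact: measurable_le_fun.
Qed.

Lemma Up_erg q : mu (Up q) = 0%E \/ mu (Up q) = 1%E.
Proof.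
apply: herg; first exact: Up_measurable.
move=> t; apply/seteqP; split => th /=.
  by move=> /(@Up_inv q (- t)); rewrite -hwD subrr hw0.
exact: Up_inv.
Qed.

Lemma Up_mono q q' : q <= q' -> Up q `<=` Up q'.
Proof.
move=> qq' th [j [k hk]]; exists j, k => n kn.
apply: le_trans (hk n kn) _; apply: ler_wpM2l; [exact: ler0n | by rewrite lerD2r].
Qed.

Lemma Up_top : Up (2 * eta + 2) = setT.
Proof.
apply/seteqP; split => // th _; exists 0%N, 1%N => n n1.
have := Gbound n th; rewrite ler_norml => /andP[_ h].
apply: le_trans h _; rewrite invr1 -natr1.
have : 1 <= n%:R :> R by rewrite ler1n.
have := heta; nra.
Qed.

Lemma Up_bot : Up (- (2 * eta)) = set0.
Proof.
apply/seteqP; split => // th [j [k hk]].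
have := hk (maxn k 1) (leq_maxl _ _).
have := Gbound (maxn k 1) th; rewrite ler_norml => /andP[h _].
have n1 : 1 <= (maxn k 1)%:R :> R by rewrite ler1n leq_maxr.
have e0 : 0 < (j.+1%:R : R)^-1 by rewrite invr_gt0 ltr0n.
move: h; rewrite -natr1; set x := (maxn k 1)%:R; set e := (j.+1%:R : R)^-1.
move: n1 e0; rewrite -/x -/e => n1 e0 h1 h2.
have := heta.
nra.
Qed.

Lemma Lexists : exists L, (forall q, L < q -> mu (Up q) = 1%E) /\
  (forall q, q < L -> mu (Up q) = 0%E).
Proof.
pose S := [set q | mu (Up q) = 1%E].
have S0 : S (2 * eta + 2) by rewrite /S /= Up_top; exact: probability_setT.
have Slb : forall q, S q -> - (2 * eta) < q.
  move=> q Sq; rewrite ltNge; apply/negP => qle.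
  have := @mu_mono _ _ _ mu _ _ (Up_measurable q) (Up_measurable (- (2 * eta)))
    (@Up_mono q _ qle).
  rewrite /S /= in Sq; rewrite Sq Up_bot measure0 lee_fin.
  by rewrite ler10.
have hlb : has_lbound S by exists (- (2 * eta)) => q /Slb /ltW.
exists (inf S); split => q hq.
  have [y Sy yq] := inf_lt (ex_intro _ _ S0) hq.
  case: (Up_erg q) => // h0.
  have := @mu_mono _ _ _ mu _ _ (Up_measurable y) (Up_measurable q) (@Up_mono y q (ltW yq)).
  by rewrite /S /= in Sy; rewrite Sy h0 lee_fin ler10.
case: (Up_erg q) => // h1.
have := ge_inf hlb h1; rewrite leNgt hq //.
Qed.

Definition Bad (q : R) (k N : nat) : set T :=
  [set th | forall n, (k <= n <= N)%N -> G n%:R th <= n%:R * q].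

Lemma Bad_measurable q k N : measurable (Bad q k N).
Proof.
have -> : Bad q k N = \bigcap_n [set th | (k <= n <= N)%N -> G n%:R th <= n%:R * q].
  apply/seteqP; split => th /= h.
    by move=> n _ hn; exact: h.
  by move=> n hn; exact: (h n I hn).
apply: bigcapT_measurable => n; apply: measurable_imp.
exact: measurable_le_fun.
Qed.

Lemma bad_small q q' : q < q' -> mu (Up q') = 0%E -> forall (k : nat) (delta : R),
  0 < delta -> exists N, (k <= N)%N /\ (mu (Bad q k N) < delta%:E)%E.
Proof.
move=> qq' mu0 k delta d0.
pose F N := Bad q k (k + N).
have mF : forall N, measurable (F N) by move=> N; exact: Bad_measurable.
have mcap : measurable (\bigcap_N F N) by exact: bigcapT_measurable.
have Fdec : {homo F : n m / (n <= m)%N >-> (m <= n)%O}.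
  move=> n m nm; apply/subsetPset => th /= h i /andP[ki im]; apply: h; rewrite ki /=.
  by apply: leq_trans im _; rewrite leq_add2l.
have cap0 : mu (\bigcap_N F N) = 0%E.
  apply/eqP; rewrite -measure_le0 -mu0; apply: le_measure; rewrite ?inE //.
    exact: Up_measurable.
  have [j hj] : exists j : nat, (j.+1%:R : R)^-1 <= q' - q.
    exists (Num.bound (q' - q)^-1).
    have h0 : 0 < q' - q by lra.
    have hi : 0 < (q' - q)^-1 by rewrite invr_gt0.
    have hb := archi_boundP (ltW hi).
    rewrite -[q' - q]invrK lef_pV2 ?posrE ?invr_gt0 ?ltr0n // invrK.
    by apply: ltW; apply: lt_le_trans hb _; rewrite ler_nat.
  move=> th hF; exists j, k => n kn.
  have := hF (n - k)%N I n; rewrite kn /= subnKC // leqnn => /(_ isT) h.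
  apply: le_trans h _; apply: ler_wpM2l; [exact: ler0n|]; move: hj; rewrite !lerBrDr addrC; exact: id.
have f0 : (mu (F 0%N) < +oo)%E.
  by apply: le_lt_trans (probability_le1 mu (mF 0%N)) _; rewrite ltey.
have := nonincreasing_cvg_mu f0 mF mcap Fdec.
rewrite (_ : _ (\bigcap_N F N) = 0%E); last exact: cap0.
move=> /fine_cvgP [hfin /cvgrPdist_lt /(_ _ d0) hnear].
have [N [hN1 hN2]] := filter_ex (filterI hfin hnear).
exists (k + N)%N; split; first exact: leq_addr.
move: hN1 hN2; rewrite /= sub0r normrN => hN1 hN2.
rewrite -(fineK hN1) lte_fin; apply: le_lt_trans hN2; exact: ler_norm.
Qed.

Lemma cover_G q k N th M (B : set T) : (0 < k)%N -> (k <= N)%N -> Bad q k N `<=` B ->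
  G 0 th + (q - D / k%:R) * M%:R
    - (`|q - D / k%:R| + 2 * eta + D) * (\sum_(i < M) (\1_B (w i%:R th) : R))
    - ((`|q - D / k%:R| + eta) * N%:R + eta + D) <= G M%:R th.
Proof.
move=> k0 kN hB.
have := @cover_ineq R (fun n => G n%:R th) (fun j n => G n%:R (w j%:R th))
  (fun j => \1_B (w j%:R th)) D eta q k N M hD heta k0 kN.
apply.
- move=> j n /=; have := hP1 j%:R n%:R th; rewrite ler_norml natrD => /andP[h _].
  have := hD; lra.
- move=> j n /=; have := Gbound n (w j%:R th); rewrite ler_norml => /andP[h _].
  exact: h.
- by move=> j; rewrite /indic; case: (_ \in _); [right|left].
- move=> j /= hj.
  have nB : ~ B (w j%:R th).
    move=> hb; move: hj; rewrite /indic; have -> : w j%:R th \in B by rewrite inE.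
    by move=> /eqP; rewrite oner_eq0.
  have nBad : ~ Bad q k N (w j%:R th) by move=> /hB.
  move: nBad; rewrite /Bad /= => /existsNP [n] /not_implyP [hn /negP].
  by rewrite -ltNge => /ltW hlt; exists n; split.
Qed.

End Gen.


Lemma key (R : realType) (d : measure_display) (T : measurableType d)
  (mu : probability T R) (w : R -> T -> T) (F : R -> T -> R) (D eta L1 L2 : R) :
  (forall t, measurable_fun setT (w t)) ->
  (forall t A, measurable A -> mu (w t @^-1` A) = mu A) ->
  0 <= D -> 0 <= eta ->
  (forall a b th, `|F (a + b) th - F a th - F b (w a th)| <= D) ->
  (forall m s th, 0 <= s <= 1 -> `|F (m + s) th - F m th| <= eta) ->
  (forall th, `|F 0 th| <= eta) ->
  (forall t, measurable_fun setT (F t)) ->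
  (forall a b th, `|- F (a + b) th - - F a th - - F b (w a th)| <= D) ->
  (forall m s th, 0 <= s <= 1 -> `|- F (m + s) th - - F m th| <= eta) ->
  (forall th, `|- F 0 th| <= eta) ->
  (forall t, measurable_fun setT (fun th => - F t th)) ->
  (forall q, q < L1 -> mu (Up R d T F q) = 0%E) ->
  (forall q, q < L2 -> mu (Up R d T (fun t th => - F t th) q) = 0%E) ->
  L1 + L2 <= 0.
Proof.
move=> wm wP hD heta h1 h2 h3 hm g1 g2 g3 gm hL1 hL2.
rewrite leNgt; apply/negP => hg.
set ep := (L1 + L2) / 8.
have ep0 : 0 < ep by rewrite /ep divr_gt0.
have hep : L1 + L2 = 8 * ep by rewrite /ep; field.
set k := (Num.bound (D / ep)).+1.
have k0 : (0 < k)%N by [].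
have hk : D / k%:R <= ep.
  have kp : (0 : R) < k%:R by rewrite ltr0n.
  have hb := archi_boundP (divr_ge0 hD (ltW ep0)).
  have : D / ep < k%:R by apply: lt_le_trans hb _; rewrite ler_nat.
  rewrite ltr_pdivrMr // => hb2; rewrite ler_pdivrMr //; lra.
have hDk0 : 0 <= D / k%:R by rewrite divr_ge0.
set q1 := L1 - 2 * ep. set q2 := L2 - 2 * ep.
set al1 := q1 - D / k%:R. set al2 := q2 - D / k%:R.
set c1 := `|al1| + 2 * eta + D. set c2 := `|al2| + 2 * eta + D.
have c10 : 0 <= c1 by rewrite /c1; have := normr_ge0 al1; lra.
have c20 : 0 <= c2 by rewrite /c2; have := normr_ge0 al2; lra.
set beta := ep / (4 * (c1 + c2 + 1)).
have b0 : 0 < beta by rewrite /beta divr_gt0 // mulr_gt0 //; lra.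
have lt1 : q1 < L1 - ep by rewrite /q1; lra.
have lt1' : L1 - ep < L1 by lra.
have lt2 : q2 < L2 - ep by rewrite /q2; lra.
have lt2' : L2 - ep < L2 by lra.
have b2 : 0 < beta / 2 by rewrite divr_gt0.
have [N1 [kN1 hN1]] := @bad_small R d T mu F hm q1 (L1 - ep) lt1 (hL1 _ lt1') k (beta / 2) b2.
have [N2 [kN2 hN2]] := @bad_small R d T mu (fun t th => - F t th) gm q2 (L2 - ep) lt2 (hL2 _ lt2') k (beta / 2) b2.
set B1 := Bad R d T F q1 k N1.
set B2 := Bad R d T (fun t th => - F t th) q2 k N2.
have mB1 : measurable B1 by exact: Bad_measurable.
have mB2 : measurable B2 by exact: Bad_measurable.
have mB : measurable (B1 `|` B2) by exact: measurableU.
have muB : (mu (B1 `|` B2) <= beta%:E)%E.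
  apply: le_trans (measureU2 mu mB1 mB2) _.
  have -> : beta = beta / 2 + beta / 2 by field.
  by rewrite EFinD; apply/ltW/lteD.
set K := ((`|al1| + eta) * N1%:R + eta + D) + ((`|al2| + eta) * N2%:R + eta + D).
set M := (Num.bound (K / ep)).+1.
have M0 : (0 < M)%N by [].
have [th hth] := @markov_orbit R d T mu w (B1 `|` B2) M beta wm wP mB muB b0 M0.
have hc1 := @cover_G R d T w F D eta hD heta h1 h2 h3 q1 k N1 th M (B1 `|` B2) k0 kN1 (@subsetUl _ B1 B2).
have hc2 := @cover_G R d T w (fun t th => - F t th) D eta hD heta g1 g2 g3 q2 k N2 th M (B1 `|` B2) k0 kN2 (@subsetUr _ B1 B2).
set S := \sum_(i < M) (\1_(B1 `|` B2) (w i%:R th) : R) in hth hc1 hc2.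
have S0 : 0 <= S by apply: sumr_ge0 => i _.
have Mp : (0 : R) < M%:R by rewrite ltr0n.
have hK : K < ep * M%:R.
  have K0 : 0 <= K.
    rewrite /K; have := normr_ge0 al1; have := normr_ge0 al2.
    have : 0 <= N1%:R :> R by []. have : 0 <= N2%:R :> R by [].
    move=> *; rewrite addr_ge0 // !addr_ge0 // mulr_ge0 //; lra.
  have hb := archi_boundP (divr_ge0 K0 (ltW ep0)).
  have : K / ep < M%:R by apply: lt_le_trans hb _; rewrite ler_nat.
  by rewrite ltr_pdivrMr // mulrC.
have f1 : 2 * ep * M%:R <= (al1 + al2) * M%:R.
  by apply: ler_wpM2r; [exact: ltW | rewrite /al1 /al2 /q1 /q2; lra].
have f2a : (c1 + c2) * S <= (c1 + c2) * (2 * beta * M%:R).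
  by apply: ler_wpM2l => //; lra.
have e1 : (c1 + c2) * (2 * beta * M%:R) = ep * M%:R / 2 - 2 * beta * M%:R.
  rewrite /beta; field; lra.
have bM : 0 <= beta * M%:R by apply: mulr_ge0; lra.
rewrite mulrDl in f1.
rewrite mulrDl in f2a.
have em : 0 < ep * M%:R by apply: mulr_gt0.
have hKdef : K = ((`|al1| + eta) * N1%:R + eta + D) + ((`|al2| + eta) * N2%:R + eta + D) by [].
have hc1' : F 0 th + al1 * M%:R - c1 * S - ((`|al1| + eta) * N1%:R + eta + D) <= F M%:R th by [].
have hc2' : - F 0 th + al2 * M%:R - c2 * S - ((`|al2| + eta) * N2%:R + eta + D) <= - F M%:R th by [].
clear hc1 hc2.
clearbody S K.
lra.
Qed.

Lemma tr_nat (R : realType) (T : Type) (psi : R -> T -> R -> R) :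
  (forall t th x, psi t th (x + 1) = psi t th x + 1) ->
  forall t th x (n : nat), psi t th (x + n%:R) = psi t th x + n%:R.
Proof.
move=> hp t th x; elim=> [|n IH]; first by rewrite !addr0.
by rewrite -natr1 addrA hp IH addrA.
Qed.

Lemma tr_int (R : realType) (T : Type) (psi : R -> T -> R -> R) :
  (forall t th x, psi t th (x + 1) = psi t th x + 1) ->
  forall t th x (z : int), psi t th (x + z%:~R) = psi t th x + z%:~R.
Proof.
move=> hp t th x; case=> n.
  exact: tr_nat.
rewrite NegzE mulrNz.
have := @tr_nat R T psi hp t th (x - n.+1%:R) n.+1.
rewrite subrK => ->; ring.
Qed.

Lemma shift_bound (R : realType) (T : Type) (psi : R -> T -> R -> R) (C : R) :
  (forall t th x, psi t th (x + 1) = psi t th x + 1) ->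
  (forall t th x x', x <= x' -> psi t th x <= psi t th x' + C) ->
  forall t th y, `|psi t th y - y - psi t th 0| <= C + 1.
Proof.
move=> hp hm t th y.
set m := Num.floor y.
have /andP[h1 h2] := floor_itv y.
rewrite -/m intrD in h2.
set r := y - m%:~R.
have -> : y = r + m%:~R by rewrite /r subrK.
rewrite (@tr_int R T psi hp).
have r0 : 0 <= r by rewrite /r subr_ge0.
have r1 : r <= 1 by rewrite /r; lra.
have := hm t th 0 r r0.
have := hm t th r 1 r1; have := hp t th 0; rewrite add0r => ->.
move=> ha hb; rewrite ler_norml; apply/andP; split; lra.
Qed.

Lemma mu_bigcap1 (R : realType) (d : measure_display) (T : measurableType d)
  (mu : probability T R) (A : nat -> set T) :
  (forall j, measurable (A j)) -> (forall j, mu (A j) = 1%E) ->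
  mu (\bigcap_j A j) = 1%E.
Proof.
move=> mA hA.
have hneg : forall j, mu.-negligible (~` A j).
  move=> j; exists (~` A j); split => //; first exact: measurableC.
  by rewrite probability_setC // hA subee.
have [B [mB muB sB]] := negligible_bigcup hneg.
apply/eqP; rewrite eq_le; apply/andP; split; first exact: probability_le1 (bigcapT_measurable mA).
have : (mu (~` B) <= mu (\bigcap_j A j))%E.
  apply: mu_mono => //; first exact: measurableC.
  exact: bigcapT_measurable.
  move=> x nBx j _; apply: contrapT => nAx; apply: nBx; apply: sB; exists j => //.
by rewrite probability_setC // muB sube0.
Qed.

Lemma mu_setI1 (R : realType) (d : measure_display) (T : measurableType d)
  (mu : probability T R) (A B : set T) :
  measurable A -> measurable B -> mu A = 1%E -> mu B = 1%E -> mu (A `&` B) = 1%E.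
Proof.
move=> mA mB hA hB.
have -> : A `&` B = \bigcap_j (if j == 0%N then A else B).
  apply/seteqP; split => x /=.
    by move=> [hxA hxB] j _; case: ifP.
  by move=> h; split; [exact: (h 0%N I) | exact: (h 1%N I)].
apply: mu_bigcap1 => j; case: ifP => //.
Qed.

Theorem theorem3p1 (R : realType) (d : measure_display) (T : measurableType d)
  (mu : probability T R) (w : R -> T -> T) (psi : R -> T -> R -> R)
  (C eta : R) :
  ergodic_mds mu w ->
  measurable_fun setT (fun p : R * T * R => (w p.1.1 p.1.2, psi p.1.1 p.1.2 p.2)) ->
  (forall t1 t2 th x, psi (t1 + t2) th x = psi t2 (w t1 th) (psi t1 th x)) ->
  (forall t th x, psi t th (x + 1) = psi t th x + 1) ->
  0 <= C ->
  (forall t th x x', x <= x' -> psi t th x <= psi t th x' + C) ->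
  0 <= eta ->
  (forall t th x, 0 <= t <= 1 -> `|psi t th x - x| <= eta) ->
  exists (rho : R) (Theta0 : set T),
    [/\ measurable Theta0, mu Theta0 = 1%E &
        forall th x, Theta0 th ->
          (psi t th x - x) / t @[t --> +oo] --> rho].
Proof.
move=> [[hwm hw0 hwD hwP] herg] hpsim hcoc hper C0 hmon eta0 hbd.
have wm : forall t, measurable_fun setT (w t).
  by move=> t; exact: (measurable_fun_pair2 t hwm).
pose F t th := psi t th 0.
have Fm : forall t, measurable_fun setT (F t).
  move=> t.
  have h1 := measurableT_comp measurable_snd hpsim.
  have h2 : measurable_fun setT (fun th : T => ((t, th), 0 : R)).
    apply: measurable_fun_pair; last exact: measurable_cst.
    by apply: measurable_fun_pair; [exact: measurable_cst | exact: measurable_id].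
  exact: (measurableT_comp h1 h2).
have Fm' : forall t, measurable_fun setT (fun th => - F t th).
  by move=> t; apply: measurable_funN.
set D := C + 1.
have hD : 0 <= D by rewrite /D; lra.
have hsb := @shift_bound R T psi C hper hmon.
have h1 : forall a b th, `|F (a + b) th - F a th - F b (w a th)| <= D.
  by move=> a b th; rewrite /F hcoc; exact: hsb.
have h2 : forall m s th, 0 <= s <= 1 -> `|F (m + s) th - F m th| <= eta.
  by move=> m s th hs; rewrite /F hcoc; exact: hbd.
have h3 : forall th, `|F 0 th| <= eta.
  by move=> th; have := hbd 0 th 0; rewrite lexx ler01 subr0 => /(_ isT).
have eN : forall x y z : R, - x - - y - - z = - (x - y - z) by move=> *; ring.
have g1 : forall a b th, `|- F (a + b) th - - F a th - - F b (w a th)| <= D.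
  by move=> a b th; rewrite eN normrN.
have g2 : forall m s th, 0 <= s <= 1 -> `|- F (m + s) th - - F m th| <= eta.
  by move=> m s th hs; rewrite opprK addrC distrC; exact: h2.
have g3 : forall th, `|- F 0 th| <= eta by move=> th; rewrite normrN.
have [L1 [hL1a hL1b]] := @Lexists R d T mu w F D eta hw0 hwD herg eta0 h1 h2 h3 Fm.
have [L2 [hL2a hL2b]] := @Lexists R d T mu w (fun t th => - F t th) D eta hw0 hwD herg eta0 g1 g2 g3 Fm'.
have hkey := @key R d T mu w F D eta L1 L2 wm hwP hD eta0 h1 h2 h3 Fm g1 g2 g3 Fm' hL1b hL2b.
pose e (j : nat) : R := (j.+1%:R)^-1.
have e0 : forall j, 0 < e j by move=> j; rewrite /e invr_gt0 ltr0n.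
pose A j := Up R d T F (L1 + e j) `&` Up R d T (fun t th => - F t th) (L2 + e j).
have mA : forall j, measurable (A j).
  by move=> j; apply: measurableI; apply: Up_measurable.
exists L1, (\bigcap_j A j); split.
- exact: bigcapT_measurable.
- apply: mu_bigcap1 => // j; apply: mu_setI1; try apply: Up_measurable => //.
    by apply: hL1a; have := e0 j; lra.
  by apply: hL2a; have := e0 j; lra.
move=> th x hth.
apply/cvgrPdist_le => ep ep0.
set j := Num.bound (4 / ep).
have hej : e j <= ep / 4.
  have h4 : 0 <= 4 / ep by rewrite divr_ge0 // ltW.
  have hb := archi_boundP h4.
  rewrite /e -[ep / 4]invf_div lef_pV2 ?posrE ?ltr0n ?divr_gt0 //.
  by apply: ltW; apply: lt_le_trans hb _; rewrite ler_nat.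
have [[j1 [k1 hk1]] [j2 [k2 hk2]]] := hth j I.
have hup : forall n, (k1 <= n)%N -> F n%:R th <= n%:R * (L1 + e j).
  move=> n kn; apply: le_trans (hk1 n kn) _; apply: ler_wpM2l => //.
  by rewrite lerBlDr lerDl invr_ge0.
have hlo : forall n, (k2 <= n)%N -> n%:R * (L1 - e j) <= F n%:R th.
  move=> n kn; have := hk2 n kn.
  have : n%:R * (L2 + e j - (j2.+1%:R)^-1) <= n%:R * (- L1 + e j).
    apply: ler_wpM2l; first exact: ler0n.
    apply: le_trans (_ : _ <= L2 + e j) _; first by rewrite lerBlDr lerDl invr_ge0.
    rewrite lerD2r; have := hkey; lra.
  move=> ha hb; move: (le_trans hb ha) => /= hc.
  have : n%:R * (- L1 + e j) = - (n%:R * (L1 - e j)) by ring.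
  lra.
set Kc := D + eta + `|L1|.
have Kc0 : 0 <= Kc by rewrite /Kc; have := normr_ge0 L1; lra.
exists ((maxn k1 k2)%:R + 1 + 4 * Kc / ep); split; first exact: num_real.
move=> t Kt.
have hKe : 0 <= 4 * Kc / ep by rewrite divr_ge0 // ?mulr_ge0 // ltW.
have t0 : 0 < t by have : (0 : R) <= (maxn k1 k2)%:R by []; lra.
set n := Num.truncn t.
have hn1 : n%:R <= t by rewrite /n truncn_le ltW.
have hn2 : t < n.+1%:R by rewrite -truncn_le_nat.
have hkn : (maxn k1 k2 < n)%N.
  rewrite -(ltr_nat R); move: hn2; rewrite -natr1; lra.
have kn1 : (k1 <= n)%N by apply: leq_trans (leq_maxl _ _) (ltnW hkn).
have kn2 : (k2 <= n)%N by apply: leq_trans (leq_maxr _ _) (ltnW hkn).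
set X := psi t th x - x.
have a1 := hsb t th x; rewrite ler_norml -/X in a1; move: a1 => /andP[a1 a1'].
have hs : 0 <= t - n%:R <= 1 by apply/andP; split; move: hn2; rewrite -natr1; lra.
have a2 := h2 n%:R (t - n%:R) th hs; rewrite [n%:R + _]addrC subrK ler_norml in a2.
move: a2 => /andP[a2 a2'].
have a3 := hup n kn1; have a3' := hlo n kn2.
have a4 : n%:R * e j <= t * e j by apply: ler_wpM2r => //; exact: ltW.
have a5 : `|L1 * (t - n%:R)| <= `|L1|.
  move: hs => /andP[hs1 hs2].
  rewrite normrM (@ger0_norm _ (t - n%:R)) //.
  by rewrite -[X in _ <= X]mulr1; apply: ler_wpM2l.
rewrite ler_norml in a5; move: a5 => /andP[a5 a5'].
have a6 : t * e j <= t * (ep / 4) by apply: ler_wpM2l => //; exact: ltW.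
have a7 : 4 * Kc <= ep * t.
  have : 4 * Kc / ep <= t by have : (0 : R) <= (maxn k1 k2)%:R by []; lra.
  by rewrite ler_pdivrMr // [ep * t]mulrC.
have -> : L1 - X / t = (t * L1 - X) / t by field; lra.
rewrite normf_div (gtr0_norm t0) ler_pdivrMr // ler_norml.
rewrite /F in a3 a3' a2 a2'.
rewrite /Kc in a7.
have hDdef : D = C + 1 by []. apply/andP; split; lra.
Qed.
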